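(* Let $g\in L^1(a,b)$ and $\varepsilon>0$. Then there exists $x_\varepsilon\in\mathbb R$ such that the grid $\mathcal G_\varepsilon=\{x_\alpha:=x_\varepsilon+2\varepsilon\alpha:\ \alpha\in\mathbb Z,\ x_\alpha\in(a+\varepsilon,b-\varepsilon)\}$ contains a subset $\mathcal G'_\varepsilon\subset\mathcal G_\varepsilon$ with $$\int_{\bigcup\{I_\varepsilon(x_\alpha):x_\alpha\in\mathcal G'_\varepsilon\}}|g|\,dt+2\,\#(\mathcal G_\varepsilon\setminus\mathcal G'_\varepsilon)\le\frac1{c_0\varepsilon}\int_a^bf\Big(\varepsilon\fint_{I_\varepsilon(x)\cap(a,b)}|g|\,dt\Big)dx.$$
   Context: $0<a<b<\infty$, $c_0>0$, $f(t)=c_0t$ for $0\le t<1$ and $f(t)=c_0$ for $t\ge1$. $I_\varepsilon(x)=(x-\varepsilon,x+\varepsilon)$, $\fint_Bh=\frac1{|B|}\int_Bh$. *)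

(* Defs.v *)
From HB Require Import structures.
From mathcomp Require Import all_boot all_order all_algebra.
From mathcomp Require Import all_classical all_reals all_analysis.
Set Implicit Arguments. Unset Strict Implicit. Unset Printing Implicit Defensive.
Import Order.TTheory GRing.Theory Num.Theory.
Local Open Scope classical_set_scope.
Local Open Scope ring_scope.

Definition fcut {R : realType} (c0 t : R) : R := if t < 1 then c0 * t else c0.

Definition Ieps {R : realType} (eps x : R) : set R := `](x - eps), (x + eps)[.

Definition avg {R : realType} (B : set R) (h : R -> R) : R :=
  (fine (lebesgue_measure B))^-1 * fine (\int[lebesgue_measure]_(t in B) (h t)%:E).

Definition gpt {R : realType} (x0 eps : R) (k : int) : R := x0 + 2 * eps * k%:~R.

Definition grid {R : realType} (a b eps x0 : R) : set int :=
  [set k | a + eps < gpt x0 eps k < b - eps].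

(* Main.v *)
Require Import Defs.
From HB Require Import structures.
From mathcomp Require Import all_boot all_order all_algebra.
From mathcomp Require Import all_classical all_reals all_analysis.
From mathcomp Require Import measurable_realfun.
From mathcomp Require Import ring lra.
Import Order.TTheory GRing.Theory Num.Theory.
Import numFieldNormedType.Exports.
Local Open Scope classical_set_scope.
Local Open Scope ring_scope.

Notation mu := (@lebesgue_measure _).

Lemma int_cc (R : realType) (a b : R) (g : R -> R) :
  mu.-integrable `]a, b[ (EFin \o g) ->
  mu.-integrable `[a, b] (EFin \o (fun t => `|g t|)).
Proof.
move=> ig; have iag := integrable_norm ig.
move/integrableP : iag => [mf fin]; apply/integrableP; split.
  exact: emeasurable_fun_itv_cc mf.
by rewrite integral_itv_bndoo//; apply: measurableT_comp => //.
Qed.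
Lemma ge0_subset_integral_nm (R : realType) (A B : set R) (f : R -> \bar R) :
  (forall x, B x -> (0 <= f x)%E) -> A `<=` B ->
  (\int[lebesgue_measure]_(x in A) f x <= \int[lebesgue_measure]_(x in B) f x)%E.
Proof.
move=> f0 AB.
rewrite ge0_integralE; last by move=> x Ax; apply: f0; apply: AB.
rewrite ge0_integralE //.
apply: ereal_sup_le => _ [h /= hf <-]; exists h => //= x.
apply: (le_trans (hf x)); rewrite /patch.
case: ifPn => xA; last by case: ifPn => // xB; apply: f0; rewrite inE in xB.
by rewrite ifT // inE; apply: AB; rewrite inE in xA.
Qed.
Definition ag {R : realType} (g : R -> R) : R -> R := fun t => `|g t|.
Definition Pf {R : realType} (a b : R) (g : R -> R) t :=
  parameterized_integral mu (a - 1) t ((ag g) \_ `[a, b]).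

Lemma P_int {R : realType} {a b : R} {g : R -> R} : a < b ->
  mu.-integrable `]a, b[ (EFin \o g) ->
  mu.-integrable `[a - 1, b + 1] (EFin \o (ag g) \_ `[a, b]).
Proof.
move=> ab ig; rewrite -restrict_EFin; apply/integrable_restrict => //.
rewrite setIidr; first exact: int_cc.
apply: subset_itvScc; rewrite bnd_simp.
  by rewrite lerBlDr lerDl.
by rewrite lerDl.
Qed.

Lemma P_cont {R : realType} {a b : R} {g : R -> R} {t} : a < b ->
  mu.-integrable `]a, b[ (EFin \o g) -> a - 1 < t < b + 1 ->
  {for t, continuous (Pf a b g)}.
Proof.
move=> ab ig tab.
have ab' : a - 1 < b + 1 by lra.
have := parameterized_integral_continuous (ltW ab') (P_int ab ig).
move/(continuous_within_itvP _ ab') => [+ _ _]; apply.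
by rewrite in_itv/=.
Qed.

Lemma P_diff {R : realType} {a b : R} {g : R -> R} {u v} : a < b ->
  mu.-integrable `]a, b[ (EFin \o g) -> a <= u -> u <= v -> v <= b ->
  Pf a b g v - Pf a b g u = \int[mu]_(x in `]u, v[) ag g x.
Proof.
move=> ab ig au uv vb.
have iv : mu.-integrable `[a - 1, v] (EFin \o (ag g) \_ `[a, b]).
  apply: integrableS (P_int ab ig) => //.
  apply: subset_itvl; rewrite bnd_simp; lra.
have h1 : (BLeft (a - 1) <= BRight u)%O by rewrite bnd_simp; lra.
have h2 : (BRight u <= BRight v)%O by rewrite bnd_simp.
rewrite /Pf /parameterized_integral Rintegral_itvB//.
rewrite -Rintegral_itv_bndo_bndc; last first.
  apply: integrableS iv => //; apply: subset_itvScc; rewrite bnd_simp //; lra.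
apply: eq_Rintegral => x; rewrite inE/= in_itv/= => /andP[ux xv].
rewrite /patch ifT// inE/= in_itv/= (le_trans au (ltW ux))/=.
exact: le_trans (ltW xv) vb.
Qed.

Lemma avg_eq (R : realType) (a b eps : R) (g : R -> R) x : a < b -> 0 < eps ->
  mu.-integrable `]a, b[ (EFin \o g) -> a + eps <= x -> x <= b - eps ->
  eps * avg (Ieps eps x `&` `]a, b[) (fun t => `|g t|) =
  (Pf a b g (x + eps) - Pf a b g (x - eps)) / 2.
Proof.
move=> ab e0 ig xa xb.
have -> : Ieps eps x `&` `]a, b[ = Ieps eps x.
  apply: setIidl; apply: subset_itvW; lra.
rewrite /avg /Ieps lebesgue_measure_itv/= lte_fin ifT; last lra.
rewrite -EFinD /=.
rewrite (P_diff ab ig); [|lra|lra|lra].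
rewrite /Rintegral /ag.
have -> : x + eps - (x - eps) = 2 * eps by lra.
by field; lra.
Qed.

Lemma fcut_min {R : realType} (c0 t : R) : fcut c0 t = c0 * Order.min t 1.
Proof. by rewrite /fcut /Order.min; case: ifP => _; rewrite ?mulr1. Qed.

Lemma fcut_cont {R : realType} (c0 : R) : continuous (fcut c0).
Proof.
move=> x; rewrite (_ : fcut c0 = (fun t => c0 * t) \o (fun t => Order.min t 1)); last first.
  by apply: funext => t; rewrite fcut_min.
apply: continuous_comp; last exact: mulrl_continuous.
exact: (@continuous_min R R id (fun=> 1) x cvg_id (cvg_cst _)).
Qed.

Definition Fc {R : realType} (a b c0 eps : R) (g : R -> R) x :=
  fcut c0 ((Pf a b g (x + eps) - Pf a b g (x - eps)) / 2).

Lemma Fc_cont {R : realType} {a b c0 eps : R} {g : R -> R} x : a < b ->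
  mu.-integrable `]a, b[ (EFin \o g) ->
  a - 1 < x - eps -> x + eps < b + 1 -> 0 < eps ->
  {for x, continuous (Fc a b c0 eps g)}.
Proof.
move=> ab ig h1 h2 e0.
apply: continuous_comp; last exact: fcut_cont.
apply: cvgM; last exact: cvg_cst.
apply: cvgB.
- apply: (@continuous_comp R R R (fun y => y + eps) (Pf a b g) x).
    by apply: cvgD; [exact: cvg_id|exact: cvg_cst].
  by apply: P_cont => //; apply/andP; split; lra.
- apply: (@continuous_comp R R R (fun y => y - eps) (Pf a b g) x).
    by apply: cvgB; [exact: cvg_id|exact: cvg_cst].
  by apply: P_cont => //; apply/andP; split; lra.
Qed.

Lemma H_ge0 {R : realType} {a b : R} {g : R -> R} {u v : R} : a < b ->
  mu.-integrable `]a, b[ (EFin \o g) -> a <= u -> u <= v -> v <= b ->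
  0 <= Pf a b g v - Pf a b g u.
Proof.
by move=> ab ig au uv vb; rewrite (P_diff ab ig au uv vb); apply: Rintegral_ge0 => x _; rewrite /ag.
Qed.

Lemma fcut_ge0 {R : realType} (c0 t : R) : 0 < c0 -> 0 <= t -> 0 <= fcut c0 t.
Proof. by move=> c0p t0; rewrite /fcut; case: ifP => _; [rewrite mulr_ge0// ltW|rewrite ltW]. Qed.

Definition Qf {R : realType} (a b c0 eps : R) (g : R -> R) x :=
  parameterized_integral mu (a + eps - 2^-1) x (Fc a b c0 eps g).

Lemma Fc_int {R : realType} {a b c0 eps : R} {g : R -> R} : a < b ->
  mu.-integrable `]a, b[ (EFin \o g) -> 0 < eps ->
  mu.-integrable `[a + eps - 2^-1, b - eps + 2^-1] (EFin \o Fc a b c0 eps g).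
Proof.
move=> ab ig e0; apply: continuous_compact_integrable; first exact: segment_compact.
apply: continuous_in_subspaceT => x; rewrite inE/= in_itv/= => /andP[h1 h2].
by apply: Fc_cont => //; lra.
Qed.

Lemma Q_cont {R : realType} {a b c0 eps : R} {g : R -> R} t : a < b ->
  mu.-integrable `]a, b[ (EFin \o g) -> 0 < eps ->
  a + eps - 2^-1 < t < b - eps + 2^-1 ->
  {for t, continuous (Qf a b c0 eps g)}.
Proof.
move=> ab ig e0 tab.
have ab' : a + eps - 2^-1 < b - eps + 2^-1.
  by case/andP: tab => h1 h2; lra.
have cQ := parameterized_integral_continuous (ltW ab') (Fc_int (c0:=c0) ab ig e0).
have [+ _ _] := (continuous_within_itvP _ ab').1 cQ; apply.
by rewrite in_itv/=.
Qed.

Lemma Q_deriv {R : realType} {a b c0 eps : R} {g : R -> R} t : a < b ->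
  mu.-integrable `]a, b[ (EFin \o g) -> 0 < eps ->
  a + eps - 2^-1 < t < b - eps + 2^-1 ->
  is_derive t 1 (Qf a b c0 eps g) (Fc a b c0 eps g t).
Proof.
move=> ab ig e0 /andP[h1 h2].
have [] := @continuous_FTC1_closed R (Fc a b c0 eps g) (a + eps - 2^-1) t
  (b - eps + 2^-1) h2 (Fc_int ab ig e0) h1.
  by apply: Fc_cont => //; lra.
move=> dQ Q'; rewrite -Q'; rewrite derive1E.
exact: derivableP.
Qed.

Lemma Q_diff {R : realType} {a b c0 eps : R} {g : R -> R} u v : a < b ->
  mu.-integrable `]a, b[ (EFin \o g) -> 0 < eps ->
  a + eps - 2^-1 <= u -> u <= v -> v <= b - eps + 2^-1 ->
  ((Qf a b c0 eps g v - Qf a b c0 eps g u)%:E =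
   \int[mu]_(x in `]u, v[) (Fc a b c0 eps g x)%:E)%E.
Proof.
move=> ab ig e0 h1 uv h2.
have iv : mu.-integrable `[a + eps - 2^-1, v] (EFin \o Fc a b c0 eps g).
  apply: integrableS (Fc_int ab ig e0) => //.
  apply: subset_itvl; rewrite bnd_simp; lra.
have k1 : (BLeft (a + eps - 2^-1) <= BRight u)%O by rewrite bnd_simp.
have k2 : (BRight u <= BRight v)%O by rewrite bnd_simp.
rewrite /Qf /parameterized_integral Rintegral_itvB//.
rewrite -Rintegral_itv_bndo_bndc; last first.
  apply: integrableS iv => //; apply: subset_itvScc; rewrite bnd_simp //; lra.
rewrite /Rintegral fineK//; apply: integrable_fin_num => //.
by apply: integrableS iv => //; apply: subset_itvW => //; rewrite bnd_simp.
Qed.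

Lemma F_ge0 {R : realType} (a b c0 eps : R) (g : R -> R) x : 0 < c0 -> 0 < eps ->
  0 <= fcut c0 (eps * avg (Ieps eps x `&` `]a, b[) (fun t => `|g t|)).
Proof.
move=> c0p e0; apply: fcut_ge0 => //; apply: mulr_ge0; first exact: ltW.
apply: mulr_ge0; first by rewrite invr_ge0; apply: fine_ge0; apply: measure_ge0.
by apply: fine_ge0; apply: integral_ge0 => t _; rewrite lee_fin.
Qed.

Lemma Q_le {R : realType} {a b c0 eps : R} {g : R -> R} : a < b ->
  mu.-integrable `]a, b[ (EFin \o g) -> 0 < eps -> 0 < c0 -> a + eps < b - eps ->
  ((Qf a b c0 eps g (b - eps) - Qf a b c0 eps g (a + eps))%:E <=
   \int[mu]_(x in `]a, b[)
     (fcut c0 (eps * avg (Ieps eps x `&` `]a, b[) (fun t => `|g t|)))%:E)%E.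
Proof.
move=> ab ig e0 c0p cd.
rewrite Q_diff //; [|lra|lra|lra].
have sub : `]a + eps, b - eps[ `<=` `]a, b[.
  apply: subset_itvW; lra.
have F0 : forall x, `]a, b[%classic x -> (0 <= (fcut c0 (eps * avg (Ieps eps x `&` `]a, b[) (fun t => `|g t|)))%:E)%E.
  by move=> x _; rewrite lee_fin; exact: F_ge0.
have := ge0_subset_integral_nm _ _ _ _ F0 sub.
apply: le_trans.
rewrite le_eqVlt; apply/orP; left; apply/eqP; apply: eq_integral => x.
rewrite inE/= in_itv/= => /andP[h1 h2].
rewrite /Fc avg_eq //; lra.
Qed.

Lemma sum_cont {R : realType} (Q : R -> R) (h y : R) (n : nat) :
  (forall k, (k < n)%N -> {for y + h * k%:R, continuous Q}) ->
  {for y, continuous (fun z => \sum_(k < n) Q (z + h * k%:R))}.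
Proof.
elim: n => [|n IH] H.
  under [X in {for y, continuous X}]funext => z do rewrite big_ord0.
  exact: cvg_cst.
under [X in {for y, continuous X}]funext => z do rewrite big_ord_recr.
apply: cvgD; first by apply: IH => k kn; apply: H; rewrite ltnS ltnW.
apply: (@continuous_comp R R R (fun z => z + h * n%:R) Q y).
  by apply: cvgD; [exact: cvg_id|exact: cvg_cst].
exact: H.
Qed.

Lemma sum_deriv {R : realType} (Q F : R -> R) (h y : R) (n : nat) :
  (forall k, (k < n)%N -> is_derive (y + h * k%:R) 1 Q (F (y + h * k%:R))) ->
  is_derive y 1 (fun z => \sum_(k < n) Q (z + h * k%:R))
    (\sum_(k < n) F (y + h * k%:R)).
Proof.
move=> H.
rewrite (_ : (fun z => _) = \sum_(k < n) (fun z => Q (z + h * k%:R))); last first.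
  by rewrite fct_sumE.
apply: is_derive_sum => k.
have := @is_derive1_comp R Q (fun z => z + h * k%:R) y _ 1 (H k (ltn_ord k)).
rewrite mulr1; apply.
exact: is_derive_shift.
Qed.

Lemma sum_mvt {R : realType} (Q F : R -> R) (h y0 y1 : R) (n : nat) : y0 < y1 ->
  (forall y k, y0 <= y <= y1 -> (k < n)%N -> {for y + h * k%:R, continuous Q}) ->
  (forall y k, y0 < y < y1 -> (k < n)%N ->
     is_derive (y + h * k%:R) 1 Q (F (y + h * k%:R))) ->
  exists2 xi, y0 < xi < y1 &
    \sum_(k < n) Q (y1 + h * k%:R) - \sum_(k < n) Q (y0 + h * k%:R) =
    (\sum_(k < n) F (xi + h * k%:R)) * (y1 - y0).
Proof.
move=> y01 Hc Hd.
have hd : forall x, x \in `]y0, y1[ -> is_derive x 1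
    (fun z => \sum_(k < n) Q (z + h * k%:R)) (\sum_(k < n) F (x + h * k%:R)).
  by move=> x; rewrite in_itv/= => xin; apply: sum_deriv => k kn; apply: Hd.
have hc : {within `[y0, y1], continuous (fun z => \sum_(k < n) Q (z + h * k%:R))}.
  apply: continuous_in_subspaceT => x; rewrite inE/= in_itv/= => xin.
  by apply: sum_cont => k kn; apply: Hc.
have [xi xiin ->] := MVT y01 hd hc.
by exists xi => //; rewrite in_itv/= in xiin.
Qed.

Lemma tele {R : realType} (Q : R -> R) (y h : R) (m : nat) :
  \sum_(k < m) Q (y + h + h * k%:R) - \sum_(k < m) Q (y + h * k%:R) =
  Q (y + h * m%:R) - Q y.
Proof.
elim: m => [|m IH]; first by rewrite !big_ord0 mulr0 addr0 !subrr.
rewrite !big_ord_recr /=.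
have -> : y + h + h * m%:R = y + h * m.+1%:R by rewrite -addn1 natrD; ring.
set A := \sum_(i < m) _; set B := \sum_(i < m) _.
have : A - B = Q (y + h * m%:R) - Q y by exact: IH.
lra.
Qed.

Lemma nat_le_R {R : realType} {h : R} {k n : nat} : 0 < h -> (k <= n)%N ->
  h * k%:R <= h * n%:R.
Proof. by move=> h0 kn; rewrite ler_pM2l// ler_nat. Qed.

Lemma choose_point {R : realType} (Q F : R -> R) (c d h : R) : 0 < h -> c < d ->
  (forall t, c <= t <= d -> {for t, continuous Q}) ->
  (forall t, c < t < d -> is_derive t 1 Q (F t)) ->
  exists xi, exists M : nat, [/\ c < xi < c + h,
    (forall k : nat, (k < M)%N = (xi + h * k%:R < d)) &
    h * \sum_(k < M) F (xi + h * k%:R) <= Q d - Q c].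
Proof.
move=> h0 cd Hc Hd.
pose P := fun N : nat => d <= c + h * N%:R.
have exP : exists N, P N.
  exists (Num.Def.archi_bound ((d - c) / h)); rewrite /P.
  have := @archi_boundP R ((d - c) / h).
  have dch : 0 <= (d - c) / h by apply: divr_ge0; lra.
  move=> /(_ dch) H.
  have : d - c <= h * (Num.Def.archi_bound ((d - c) / h))%:R.
    by rewrite -ler_pdivrMl// mulrC ltW.
  lra.
case: (ex_minnP exP) => N PN Nmin.
have NP : (0 < N)%N.
  rewrite lt0n; apply/negP => /eqP N0; move: PN; rewrite N0 /P mulr0 addr0; lra.
case: N PN Nmin NP => // n PN Nmin _.
have nP : ~~ (d <= c + h * n%:R).
  by apply/negP => /Nmin; rewrite ltnn.
move: nP; rewrite -ltNge => nP.
move: PN; rewrite /P -addn1 natrD mulrDr mulr1 => PN.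
pose ys := d - h * n%:R.
have cys : c < ys by rewrite /ys; lra.
have ysh : ys <= c + h by rewrite /ys; lra.
have rng1 : forall y k, c <= y <= ys -> (k < n.+1)%N -> c <= y + h * k%:R <= d.
  move=> y k /andP[h1 h2]; rewrite ltnS => /(nat_le_R h0) kn.
  have k0 : 0 <= h * k%:R by rewrite mulr_ge0 // ltW.
  apply/andP; split; rewrite /ys in h2; lra.
have rng2 : forall y k, c < y < ys -> (k < n.+1)%N -> c < y + h * k%:R < d.
  move=> y k /andP[h1 h2]; rewrite ltnS => /(nat_le_R h0) kn.
  have k0 : 0 <= h * k%:R by rewrite mulr_ge0 // ltW.
  apply/andP; split; rewrite /ys in h2; lra.
have [xi1 /andP[x1a x1b] E1] := @sum_mvt R Q F h c ys n.+1 cys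
  (fun y k yr kn => Hc (y + h * k%:R) (rng1 y k yr kn))
  (fun y k yr kn => Hd (y + h * k%:R) (rng2 y k yr kn)).
have [case1|case2] := leP (h * \sum_(k < n.+1) F (xi1 + h * k%:R)) (Q d - Q c).
  exists xi1, n.+1; split => //.
  - by apply/andP; split; lra.
  move=> k; case: (ltnP k n.+1) => kn.
    move: kn; rewrite ltnS => /(nat_le_R h0) kn; apply/esym; rewrite /ys in x1b; lra.
  move: kn => /(nat_le_R h0); rewrite -addn1 natrD mulrDr mulr1 => kn.
  apply/esym/negbTE; rewrite -leNgt; lra.
have ysh' : ys < c + h.
  rewrite lt_neqAle ysh andbT; apply/negP => /eqP ysE.
  move: E1; rewrite ysE tele.
  have -> : c + h * n.+1%:R = d by rewrite -addn1 natrD /ys in ysE *; lra.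
  lra.
have rng3 : forall y k, ys <= y <= c + h -> (k < n)%N -> c <= y + h * k%:R <= d.
  move=> y k /andP[h1 h2] kn; have := nat_le_R h0 kn; rewrite -addn1 natrD mulrDr mulr1 => kn'.
  have k0 : 0 <= h * k%:R by rewrite mulr_ge0 // ltW.
  apply/andP; split; rewrite /ys in h1; lra.
have rng4 : forall y k, ys < y < c + h -> (k < n)%N -> c < y + h * k%:R < d.
  move=> y k /andP[h1 h2] kn; have := nat_le_R h0 kn; rewrite -addn1 natrD mulrDr mulr1 => kn'.
  have k0 : 0 <= h * k%:R by rewrite mulr_ge0 // ltW.
  apply/andP; split; rewrite /ys in h1; lra.
have [xi2 /andP[x2a x2b] E2] := @sum_mvt R Q F h ys (c + h) n ysh'
  (fun y k yr kn => Hc (y + h * k%:R) (rng3 y k yr kn))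
  (fun y k yr kn => Hd (y + h * k%:R) (rng4 y k yr kn)).
have T := tele Q c h n.
have e1 : \sum_(k < n.+1) Q (ys + h * k%:R) = \sum_(k < n) Q (ys + h * k%:R) + Q d.
  by rewrite big_ord_recr /=; congr (_ + Q _); rewrite /ys; lra.
have e2 : \sum_(k < n.+1) Q (c + h * k%:R) = \sum_(k < n) Q (c + h * k%:R) + Q (c + h * n%:R).
  by rewrite big_ord_recr.
rewrite e1 e2 in E1.
exists xi2, n; split.
- by apply/andP; split; lra.
- move=> k; case: (ltnP k n) => kn.
    move: kn; rewrite -addn1 => /(nat_le_R h0); rewrite natrD mulrDr mulr1 => kn.
    apply/esym; lra.
  move: kn => /(nat_le_R h0) kn.
  apply/esym/negbTE; rewrite -leNgt; rewrite /ys in x2a; lra.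
- have w2 : 0 < c + h - ys by lra.
  have w1 : 0 < ys - c by lra.
  have E : Q d - Q c = (\sum_(k < n.+1) F (xi1 + h * k%:R)) * (ys - c) +
    (\sum_(k < n) F (xi2 + h * k%:R)) * (c + h - ys) by lra.
  nra.
Qed.

Lemma int_setU_le {R : realType} (A U V : set R) (f : R -> \bar R) :
  measurable U -> measurable V -> U `<=` A -> V `<=` A ->
  measurable_fun A f -> (forall x, A x -> (0 <= f x)%E) -> measurable A ->
  (\int[mu]_(x in U `|` V) f x <= \int[mu]_(x in U) f x + \int[mu]_(x in V) f x)%E.
Proof.
move=> mU mV UA VA mf f0 mA.
have -> : U `|` V = U `|` (V `\` U).
  apply/seteqP; split => x /=; last by case=> [|[]]; [left|right].
  by case=> [Ux|Vx]; [left|case: (pselect (U x)) => Ux; [left|right]].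
have sUV : U `|` (V `\` U) `<=` A.
  by move=> x [/UA//|[/VA]].
rewrite ge0_integral_setU//; first last.
- by rewrite disj_set2E; apply/eqP; apply/seteqP; split => x //= [? []].
- by move=> x /sUV /f0.
- exact: measurable_funS mf.
- exact: measurableD.
rewrite leeD2l// ge0_subset_integral_nm//.
by move=> x /VA /f0.
Qed.

Lemma union_bound {R : realType} (A : set R) (f : R -> R) (J : nat -> set R)
    (p : nat -> bool) (M : nat) :
  measurable A -> measurable_fun A f -> (forall x, A x -> 0 <= f x) ->
  (forall i, measurable (J i)) -> (forall i, J i `<=` A) ->
  (\int[mu]_(x in \bigcup_(i in [set i | (i < M)%N && p i]) J i) (f x)%:E <=
   \sum_(i < M) (if p i then \int[mu]_(x in J i) (f x)%:E else 0))%E.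
Proof.
move=> mA mf f0 mJ JA.
have mfE : measurable_fun A (EFin \o f) by exact/measurable_EFinP.
have f0E : forall x, A x -> (0 <= (EFin \o f) x)%E by move=> x /f0; rewrite lee_fin.
elim: M => [|M IH].
  rewrite big_ord0 (_ : [set i | _] = set0) ?bigcup_set0 ?integral_set0//.
  by apply/seteqP; split => x.
rewrite big_ord_recr /=.
have -> : \bigcup_(i in [set i | (i < M.+1)%N && p i]) J i =
    \bigcup_(i in [set i | (i < M)%N && p i]) J i `|` (if p M then J M else set0).
  apply/seteqP; split => x /=.
    move=> [i /andP[iM pi] Jx]; move: iM; rewrite ltnS leq_eqVlt => /orP[/eqP ie|iM].
      by right; rewrite -ie pi.
    by left; exists i => //; rewrite /= iM.
  case=> [[i /andP[iM pi] Jx]|].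
    by exists i => //=; rewrite pi andbT ltnS ltnW.
  by case: ifPn => // pM JM; exists M => //=; rewrite pM ltnSn.
have mU : measurable (\bigcup_(i in [set i | (i < M)%N && p i]) J i).
  by apply: bigcup_measurable => k _; apply: mJ.
have UA : \bigcup_(i in [set i | (i < M)%N && p i]) J i `<=` A.
  by move=> x [i _ /JA].
apply: le_trans.
  apply: (@int_setU_le R A) => //.
  - by case: ifP.
  - by case: ifP => // _ x.
apply: leeD => //.
by case: ifP => _; rewrite ?integral_set0.
Qed.

Lemma int_I {R : realType} {a b eps : R} {g : R -> R} x : a < b ->
  mu.-integrable `]a, b[ (EFin \o g) -> 0 < eps -> a + eps <= x -> x <= b - eps ->
  (\int[mu]_(t in Ieps eps x) (ag g t)%:E =
   (Pf a b g (x + eps) - Pf a b g (x - eps))%:E)%E.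
Proof.
move=> ab ig e0 h1 h2.
rewrite (P_diff ab ig); [|lra|lra|lra].
rewrite /Rintegral fineK// /Ieps; apply: integrable_fin_num => //.
apply: integrableS (integrable_norm ig) => //.
apply: subset_itvW; lra.
Qed.

Lemma fcut_case {R : realType} (c0 H : R) : 0 < c0 ->
  (if H < 2 then H else 2) = 2 / c0 * fcut c0 (H / 2).
Proof.
move=> c0p; rewrite /fcut.
have -> : (H / 2 < 1) = (H < 2) by rewrite ltr_pdivrMr// mul1r.
by case: ifP => _; field; lra.
Qed.

Lemma count_fsbig {R : realType} (M : nat) (p : nat -> bool) :
  \sum_(k \in (fun i : nat => i%:Z) @` [set i | (i < M)%N && p i]) (1 : R) =
  \sum_(i < M) (if p i then 1 else 0).
Proof.
rewrite fsbig_image; last by move=> x y _ _ [].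
have -> : \sum_(i < M) (if p i then (1:R) else 0) =
    \sum_(0 <= i < M) (if p i then 1 else 0) by rewrite big_mkord.
rewrite -big_mkcond /=.
rewrite (_ : [set i | _] = [set` [seq i <- index_iota 0 M | p i]]); last first.
  apply/seteqP; split => x /=; rewrite mem_filter mem_index_iota leq0n /=;
  by rewrite andbC.
rewrite -fsbig_seq; last by rewrite filter_uniq// iota_uniq.
by rewrite big_filter.
Qed.

Theorem mainTheorem4 (R : realType) (a b c0 eps : R) (g : R -> R) :
  a < b -> 0 < c0 -> 0 < eps ->
  (lebesgue_measure : measure _ R).-integrable `]a, b[ (EFin \o g) ->
  exists x0 : R, exists G' : set int,
    G' `<=` grid a b eps x0 /\
    ((\int[lebesgue_measure]_(t in \bigcup_(k in G') Ieps eps (gpt x0 eps k)) `|g t|%:E)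
      + (2 * \sum_(k \in grid a b eps x0 `\` G') (1 : R))%:E
     <= ((c0 * eps)^-1)%:E *
        \int[lebesgue_measure]_(x in `]a, b[)
           (fcut c0 (eps * avg (Ieps eps x `&` `]a, b[) (fun t => `|g t|)))%:E)%E.
Proof.
move=> ab c0p e0 ig.
have RHS0 : (0 <= ((c0 * eps)^-1)%:E *
        \int[lebesgue_measure]_(x in `]a, b[)
           (fcut c0 (eps * avg (Ieps eps x `&` `]a, b[) (fun t => `|g t|)))%:E)%E.
  apply: mule_ge0; first by rewrite lee_fin invr_ge0 mulr_ge0// ltW.
  by apply: integral_ge0 => x _; rewrite lee_fin; apply: F_ge0.
have [dc|cd] := leP (b - eps) (a + eps).
  exists 0, set0; split; first by [].
  have -> : grid a b eps 0 `\` set0 = set0.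
    by rewrite setD0; apply/seteqP; split => k //= /andP[h1 h2]; lra.
  by rewrite bigcup_set0 integral_set0 fsbig_set0 mulr0 add0e.
have h0 : 0 < 2 * eps by lra.
have Hc : forall t, a + eps <= t <= b - eps -> {for t, continuous (Qf a b c0 eps g)}.
  by move=> t /andP[h1 h2]; apply: Q_cont => //; apply/andP; split; lra.
have Hd : forall t, a + eps < t < b - eps -> is_derive t 1 (Qf a b c0 eps g) (Fc a b c0 eps g t).
  by move=> t /andP[h1 h2]; apply: Q_deriv => //; apply/andP; split; lra.
have [xi [M [/andP[xi1 xi2] gridM Hs]]] := choose_point _ _ _ _ _ h0 cd Hc Hd.
pose Hn (i : nat) := Pf a b g (xi + 2 * eps * i%:R + eps) - Pf a b g (xi + 2 * eps * i%:R - eps).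
pose G' := grid a b eps xi `&` [set k : int | Pf a b g (gpt xi eps k + eps) - Pf a b g (gpt xi eps k - eps) < 2].
exists xi, G'; split; first exact: subIsetl.
have gridE : forall k : int, grid a b eps xi k <-> exists2 i : nat, (i < M)%N & k = i%:Z.
  move=> k; split.
    rewrite /grid /= => /andP[h1 h2]; case: k h1 h2 => [i|i] h1 h2.
      by exists i => //; rewrite gridM.
    exfalso; move: h1; rewrite /gpt.
    have : ((Negz i)%:~R : R) <= -1.
      have -> : (-1 : R) = (-1 : int)%:~R by [].
      by rewrite ler_int.
    set z := ((Negz i)%:~R : R) => z1.
    have : 2 * eps * z <= 2 * eps * (-1) by rewrite ler_pM2l.
    lra.
  move=> [i iM ->]; rewrite /grid /= /gpt /=; apply/andP; split.
    have : 0 <= 2 * eps * i%:R by rewrite mulr_ge0// ltW.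
    lra.
  by rewrite -gridM.
pose J (i : nat) := if (i < M)%N then Ieps eps (xi + 2 * eps * i%:R) else set0.
have xir : forall i : nat, (i < M)%N -> a + eps <= xi + 2 * eps * i%:R <= b - eps.
  move=> i iM; have : 0 <= 2 * eps * i%:R by rewrite mulr_ge0// ltW.
  by move: iM; rewrite gridM => iM i0; apply/andP; split; lra.
have UE : \bigcup_(k in G') Ieps eps (gpt xi eps k) =
    \bigcup_(i in [set i | (i < M)%N && (Hn i < 2)]) J i.
  apply/seteqP; split => x /=.
    move=> [k [/gridE [i iM ->] Hk] Ix]; exists i; first by rewrite /= iM.
    by rewrite /J iM.
  move=> [i /andP[iM Hi] Jx]; exists (i%:Z).
    by split => //; apply/gridE; exists i.
  by move: Jx; rewrite /J iM.
have mag : measurable_fun `]a, b[ (ag g).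
  by have /integrableP[/measurable_EFinP] := integrable_norm ig.
have U := @union_bound R `]a, b[ (ag g) J (fun i => Hn i < 2) M
  (measurable_itv _) mag (fun x _ => normr_ge0 _)
  (fun i => ltac:(rewrite /J; case: ifP => _ //; exact: measurable_itv))
  (fun i => ltac:(rewrite /J; case: ifPn => iM //;
     have /andP[h1 h2] := xir i iM; apply: subset_itvW; lra)).
rewrite /ag -UE in U.
have UE2 : (\sum_(i < M) (if (Hn i < 2)%R then \int[mu]_(x in J i) (ag g x)%:E else 0))%E =
    (\sum_(i < M) (if Hn i < 2 then Hn i else 0))%:E.
  rewrite -sumEFin; apply: eq_bigr => i _.
  case: ifP => // _; rewrite /J ltn_ord.
  have /andP[h1 h2] := xir i (ltn_ord i).
  by rewrite (int_I _ ab ig e0 h1 h2).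
rewrite /ag UE2 in U.
have CE : grid a b eps xi `\` G' = (fun i : nat => i%:Z) @` [set i | (i < M)%N && ~~ (Hn i < 2)].
  apply/seteqP; split => k /=.
    move=> [/gridE [i iM ->] nG]; exists i => //=; rewrite iM /=.
    by apply/negP => Hi; apply: nG; split => //; apply/gridE; exists i.
  move=> [i /andP[iM Hi] <-]; split; first by apply/gridE; exists i.
  by move=> [_ /= Hi']; move/negP: Hi; apply.
rewrite CE count_fsbig.
apply: le_trans (leeD U (lexx _)) _.
rewrite -EFinD.
have key : \sum_(i < M) (if Hn i < 2 then Hn i else 0) +
    2 * \sum_(i < M) (if ~~ (Hn i < 2) then 1 else 0) =
    2 / c0 * \sum_(k < M) Fc a b c0 eps g (xi + 2 * eps * k%:R).
  rewrite !mulr_sumr -big_split; apply: eq_bigr => i _.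
  rewrite /Fc -fcut_case//; rewrite -/(Hn i).
  by case: ifP => _ /=; rewrite ?mulr0 ?mulr1 ?addr0 ?add0r.
rewrite key.
have c0e : (0 <= ((c0 * eps)^-1)%:E)%E by rewrite lee_fin invr_ge0 mulr_ge0// ltW.
apply: le_trans (lee_wpmul2l c0e (Q_le ab ig e0 c0p cd)).
rewrite -EFinM lee_fin.
set S := \sum_(k < M) _ in Hs *.
have : (c0 * eps)^-1 * (2 * eps * S) <= (c0 * eps)^-1 *
    (Qf a b c0 eps g (b - eps) - Qf a b c0 eps g (a + eps)).
  by rewrite ler_wpM2l// invr_ge0 mulr_ge0// ltW.
have -> : (c0 * eps)^-1 * (2 * eps * S) = 2 / c0 * S by field; lra.
by [].
Qed.
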